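(* For every $\psi\in\Psi$, $$\lambda\Big(\#\{i\le n:\beta_i\ge n\,\psi(\lfloor\log n\rfloor)\}\ge1\ \text{for infinitely many } n\Big)=0.$$
   Context: Let $\lambda$ be Lebesgue measure on $[0,1)$, $\tau(x)=2x\bmod1$, $\chi(x)=\lfloor1/x\rfloor$, $B=[1/2,1)$, $\phi(x)=\inf\{n\in\mathbb N_0:\tau^nx\in B\}+1$, $\tau_Bx=\tau^{\phi(x)}x$ (defined $\lambda$-a.e.), and $\beta_i=\chi\circ\tau_B^{\,i-1}$. $\Psi=\{u:\mathbb N\to\mathbb R_{>0}:\sum_{n\ge1}1/u(n)<\infty\}$. Logarithms are natural. *)

(* Defs.v *)
From Stdlib Require Import Reals Lra Lia ClassicalEpsilon.
Open Scope R_scope.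

Definition tau (x : R) : R := 2 * x - IZR (Int_part (2 * x)).

Definition chi (x : R) : R := IZR (Int_part (/ x)).

Definition inB (x : R) : Prop := 1/2 <= x < 1.

Definition first_hit (x : R) (n : nat) : Prop :=
  inB (Nat.iter n tau x) /\ forall k, (k < n)%nat -> ~ inB (Nat.iter k tau x).

(* phi(x) = inf{n >= 0 : tau^n x in B} + 1; defined lambda-a.e.
   (off the null set where the orbit never enters B the value is an
   unspecified natural number, which is irrelevant for null-set statements) *)
Definition phi (x : R) : nat :=
  epsilon (inhabits 0%nat) (fun m => exists n, m = S n /\ first_hit x n).

Definition tauB (x : R) : R := Nat.iter (phi x) tau x.

Definition beta (i : nat) (x : R) : R := chi (Nat.iter (i - 1) tauB x).

Definition inPsi (u : nat -> R) : Prop :=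
  (forall n, (1 <= n)%nat -> 0 < u n) /\
  exists l, infinite_sum (fun k => / u (S k)) l.

Definition floor_log (n : nat) : nat := Z.to_nat (Int_part (ln (INR n))).

Definition lebesgue_null (A : R -> Prop) : Prop :=
  forall eps, 0 < eps ->
    exists a b : nat -> R,
      (forall k, a k <= b k) /\
      (forall x, A x -> exists k, a k < x < b k) /\
      (forall N, sum_f_R0 (fun k => b k - a k) N <= eps).

(* Main.v *)
Require Import Defs.
From Stdlib Require Import Reals Lra Lia ClassicalEpsilon List Classical.
Open Scope R_scope.

Lemma Int_part_eq (r : R) (z : Z) : IZR z <= r < IZR z + 1 -> Int_part r = z.
Proof.
  intros [H1 H2]. unfold Int_part.
  assert (up r = (z + 1)%Z).
  { symmetry. apply tech_up; rewrite plus_IZR; simpl; lra. }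
  rewrite H. lia.
Qed.

Lemma tau_range (y : R) : 0 <= tau y < 1.
Proof. unfold tau. destruct (base_Int_part (2*y)). lra. Qed.

Lemma iter_tau_range n x : 0 <= x < 1 -> 0 <= Nat.iter n tau x < 1.
Proof. destruct n; simpl; auto. intros; apply tau_range. Qed.

Lemma tauB_range x : 0 <= x < 1 -> 0 <= tauB x < 1.
Proof. unfold tauB. apply iter_tau_range. Qed.

Lemma iter_tauB_range n x : 0 <= x < 1 -> 0 <= Nat.iter n tauB x < 1.
Proof. induction n; simpl; auto. intros; apply tauB_range; auto. Qed.

Lemma iter_shift {A} (f : A -> A) j x : Nat.iter j f (f x) = Nat.iter (S j) f x.
Proof. induction j; simpl; auto. simpl in IHj. rewrite IHj. auto. Qed.

Lemma tau_small y : 0 <= y < 1/2 -> tau y = 2 * y.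
Proof.
  intros H. unfold tau. rewrite (Int_part_eq (2*y) 0); simpl; lra.
Qed.

Lemma tau_big y : 1/2 <= y < 1 -> tau y = 2 * y - 1.
Proof.
  intros H. unfold tau. rewrite (Int_part_eq (2*y) 1); simpl; lra.
Qed.

Lemma iter_tau_pow n x : 0 <= x < 1 ->
  (forall k, (k < n)%nat -> ~ inB (Nat.iter k tau x)) ->
  Nat.iter n tau x = 2 ^ n * x.
Proof.
  induction n; intros Hx H; simpl. lra.
  assert (E: Nat.iter n tau x = 2^n*x) by (apply IHn; auto; intros; apply H; lia).
  assert (Hr := iter_tau_range n x Hx).
  assert (Hn := H n (Nat.lt_succ_diag_r n)).
  rewrite E in Hr, Hn |- *.
  unfold inB in Hn.
  rewrite tau_small; lra.
Qed.

Lemma first_hit_unique x n m : first_hit x n -> first_hit x m -> n = m.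
Proof.
  intros [H1 H2] [H3 H4].
  destruct (Nat.lt_trichotomy n m) as [h|[h|h]]; auto.
  - exfalso. apply (H4 n h H1).
  - exfalso. apply (H2 m h H3).
Qed.

Lemma phi_eq x n : first_hit x n -> phi x = S n.
Proof.
  intros H. unfold phi.
  destruct (epsilon_spec (inhabits 0%nat) (fun m => exists n, m = S n /\ first_hit x n))
    as [n' [E H']].
  { exists (S n), n; auto. }
  rewrite E. f_equal. symmetry; eapply first_hit_unique; eauto.
Qed.

Lemma min_exists (P : nat -> Prop) N : (exists k, (k < N)%nat /\ P k) ->
  exists n, (n < N)%nat /\ P n /\ forall k, (k < n)%nat -> ~ P k.
Proof.
  induction N; intros [k [Hk Pk]]. lia.
  destruct (classic (exists k, (k < N)%nat /\ P k)) as [E|E].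
  - destruct (IHN E) as [n [? [? ?]]]. exists n; repeat split; auto.
  - exists N. repeat split; auto.
    + assert (k = N) by (destruct (Nat.eq_dec k N); auto; exfalso; apply E; exists k; split; auto; lia).
      subst; auto.
    + intros k' Hk' Pk'. apply E; eauto.
Qed.

Lemma pow_inv_2 k : 2 ^ k * (/2) ^ k = 1.
Proof. induction k; simpl. lra. replace (2 * 2 ^ k * (/ 2 * (/ 2) ^ k)) with ((2 * /2) * (2^k * (/2)^k)) by ring. rewrite IHk. field. Qed.

Lemma tauB_first x n : 0 <= x < 1 -> first_hit x n -> tauB x = 2 ^ S n * x - 1.
Proof.
  intros Hx H. unfold tauB. rewrite (phi_eq x n H). simpl.
  destruct H as [H1 H2]. rewrite iter_tau_pow in H1 |- *; auto.
  unfold inB in H1. rewrite tau_big; auto. ring.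
Qed.

Fixpoint lenL (l : list (R*R)) : R :=
  match l with nil => 0 | p :: t => (snd p - fst p) + lenL t end.
Definition wf (l : list (R*R)) := Forall (fun p => fst p <= snd p) l.
Definition inL x (l : list (R*R)) := exists p, In p l /\ fst p < x < snd p.

Lemma lenL_app l1 l2 : lenL (l1 ++ l2) = lenL l1 + lenL l2.
Proof. induction l1; simpl; [ring | rewrite IHl1; ring]. Qed.

Lemma lenL_nonneg l : wf l -> 0 <= lenL l.
Proof. induction 1; simpl; lra. Qed.

Lemma wf_app l1 l2 : wf l1 -> wf l2 -> wf (l1 ++ l2).
Proof. intros; apply Forall_app; auto. Qed.

Lemma inL_app_l x l1 l2 : inL x l1 -> inL x (l1 ++ l2).
Proof. intros [p [? ?]]; exists p; split; auto; apply in_or_app; auto. Qed.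
Lemma inL_app_r x l1 l2 : inL x l2 -> inL x (l1 ++ l2).
Proof. intros [p [? ?]]; exists p; split; auto; apply in_or_app; auto. Qed.

Definition branch (n : nat) (l : list (R*R)) :=
  map (fun p => ((1 + fst p) * (/2) ^ S n, (1 + snd p) * (/2) ^ S n)) l.

Lemma pos_half k : 0 < (/2) ^ k.
Proof. apply pow_lt; lra. Qed.

Lemma lenL_branch n l : lenL (branch n l) = lenL l * (/2) ^ S n.
Proof. induction l; simpl in *. ring. rewrite IHl. ring. Qed.

Lemma wf_branch n l : wf l -> wf (branch n l).
Proof.
  induction 1; simpl; constructor; auto. simpl.
  apply Rmult_le_compat_r. left; apply (pos_half (S n)). lra.
Qed.

Lemma inL_branch n l x : inL (2 ^ S n * x - 1) l -> inL x (branch n l).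
Proof.
  intros [p [Hp [H1 H2]]].
  exists ((1 + fst p) * (/2) ^ S n, (1 + snd p) * (/2) ^ S n). split.
  - apply (in_map (fun p => ((1 + fst p) * (/2) ^ S n, (1 + snd p) * (/2) ^ S n))); auto.
  - change (fst ((1 + fst p) * (/ 2) ^ S n, (1 + snd p) * (/ 2) ^ S n)) with ((1 + fst p) * (/ 2) ^ S n).
    change (snd ((1 + fst p) * (/ 2) ^ S n, (1 + snd p) * (/ 2) ^ S n)) with ((1 + snd p) * (/ 2) ^ S n).
    assert (E : x = (1 + (2 ^ S n * x - 1)) * (/2) ^ S n).
    { replace (1 + (2 ^ S n * x - 1)) with (2 ^ S n * x) by ring.
      rewrite Rmult_assoc, (Rmult_comm x), <- Rmult_assoc, pow_inv_2. ring. }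
    assert (Hq := pos_half (S n)).
    rewrite E. split; apply Rmult_lt_compat_r; lra.
Qed.

Fixpoint pre (l : list (R*R)) (N : nat) : list (R*R) :=
  match N with 0 => nil | S N' => branch N' l ++ pre l N' end.

Lemma lenL_pre l N : lenL (pre l N) = lenL l * (1 - (/2) ^ N).
Proof.
  induction N; simpl. ring.
  rewrite lenL_app, lenL_branch, IHN. simpl. field.
Qed.

Lemma wf_pre l N : wf l -> wf (pre l N).
Proof. intros; induction N; simpl. constructor. apply wf_app; auto. apply wf_branch; auto. Qed.

Lemma inL_pre l N n x : (n < N)%nat -> inL x (branch n l) -> inL x (pre l N).
Proof.
  induction N; intros. lia. simpl.
  destruct (Nat.eq_dec n N). subst. apply inL_app_l; auto.
  apply inL_app_r. apply IHN; auto. lia.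
Qed.

Lemma step (Q : R -> Prop) l e δ : wf l -> lenL l <= e ->
  (forall y, 0 <= y < 1 -> Q y -> inL y l) -> 0 < δ ->
  exists l', wf l' /\ lenL l' <= e + δ /\
    forall x, 0 <= x < 1 -> Q (tauB x) -> inL x l'.
Proof.
  intros Hwf Hlen Hcov Hd.
  destruct (pow_lt_1_zero (/2) ltac:(rewrite Rabs_right; lra) (δ/2) ltac:(lra)) as [N HN].
  specialize (HN N (le_n N)). rewrite Rabs_right in HN by (left; apply pos_half).
  assert (Hp := pos_half N).
  exists ((-(δ/2), (/2)^N) :: pre l N). split; [|split].
  - constructor. simpl; lra. apply wf_pre; auto.
  - simpl. rewrite lenL_pre. assert (0 <= lenL l) by (apply lenL_nonneg; auto).
    assert (lenL l * (1 - (/2)^N) <= lenL l).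
    { assert (lenL l * (/2)^N >= 0) by (apply Rle_ge; apply Rmult_le_pos; lra). nra. }
    lra.
  - intros x Hx HS.
    destruct (classic (exists k, (k < N)%nat /\ inB (Nat.iter k tau x))) as [E|E].
    + destruct (min_exists _ _ E) as [n [Hn [H1 H2]]].
      assert (Hf : first_hit x n) by (split; auto).
      change (inL x (((-(δ/2), (/2)^N) :: nil) ++ pre l N)).
      apply inL_app_r. apply (inL_pre _ _ n); auto.
      apply inL_branch. rewrite <- (tauB_first x n); auto.
      apply Hcov; auto. apply tauB_range; auto.
    + exists (-(δ/2), (/2)^N). split. left; auto. simpl. split. lra.
      assert (Hi : Nat.iter N tau x = 2^N * x).
      { apply iter_tau_pow; auto. intros k Hk Hb. apply E. exists k; auto. }
      assert (Hr := iter_tau_range N x Hx). rewrite Hi in Hr.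
      assert (x = (2^N * x) * (/2)^N).
      { rewrite Rmult_assoc, (Rmult_comm x), <- Rmult_assoc, pow_inv_2. ring. }
      rewrite H. rewrite <- (Rmult_1_l ((/2)^N)) at 2.
      apply Rmult_lt_compat_r; lra.
Qed.

Lemma iterate (Q : R -> Prop) l e j : wf l -> lenL l <= e ->
  (forall y, 0 <= y < 1 -> Q y -> inL y l) -> forall δ, 0 < δ ->
  exists l', wf l' /\ lenL l' <= e + δ /\
    forall x, 0 <= x < 1 -> Q (Nat.iter j tauB x) -> inL x l'.
Proof.
  intros Hwf Hlen Hcov. induction j; intros δ Hd.
  - exists l. split; auto. split. lra. simpl. auto.
  - destruct (IHj (δ/2)) as [l1 [W1 [L1 C1]]]. lra.
    destruct (step (fun y => Q (Nat.iter j tauB y)) l1 (e + δ/2) (δ/2) W1 L1 C1)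
      as [l2 [W2 [L2 C2]]]. lra.
    exists l2. split; auto. split. lra.
    intros x Hx HS. apply C2; auto. rewrite iter_shift. auto.
Qed.

Lemma beta_small i x T : 0 < T -> 0 <= x < 1 -> beta i x >= T ->
  Nat.iter (i - 1) tauB x <= / T.
Proof.
  intros HT Hx Hb. unfold beta, chi in Hb.
  set (y := Nat.iter (i - 1) tauB x) in *.
  assert (Hy : 0 <= y < 1) by (apply iter_tauB_range; auto).
  destruct (base_Int_part (/ y)) as [H1 _].
  destruct (Req_dec y 0) as [E|E].
  - rewrite E, Rinv_0 in H1, Hb. lra.
  - assert (Hyp : 0 < y) by lra.
    rewrite <- (Rinv_inv y). apply Rinv_le_contravar; lra.
Qed.

Lemma cover_beta i T δ : 0 < T -> 0 < δ ->
  exists l, wf l /\ lenL l <= / T + δ /\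
    forall x, 0 <= x < 1 -> beta i x >= T -> inL x l.
Proof.
  intros HT Hd.
  assert (HiT : 0 < / T) by (apply Rinv_0_lt_compat; auto).
  set (l0 := (-(δ/4), /T + δ/4) :: nil).
  destruct (iterate (fun y => y <= / T) l0 (/T + δ/2) (i - 1)) with (δ := δ/2)
    as [l [W [L C]]].
  - constructor. simpl; lra. constructor.
  - simpl. lra.
  - intros y Hy Hyl. exists (-(δ/4), /T + δ/4). split. left; auto. simpl; lra.
  - lra.
  - exists l. split; auto. split. lra.
    intros x Hx Hb. apply C; auto. apply beta_small; auto.
Qed.

Lemma cover_union K T δ : 0 < T -> 0 < δ ->
  exists l, wf l /\ lenL l <= INR K * / T + δ /\
    forall x, 0 <= x < 1 -> (exists i, (1 <= i <= K)%nat /\ beta i x >= T) -> inL x l.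
Proof.
  intros HT. revert δ. induction K; intros δ Hd.
  - exists nil. split. constructor. split. simpl; lra.
    intros x _ [i [Hi _]]. lia.
  - destruct (IHK (δ/2)) as [l1 [W1 [L1 C1]]]. lra.
    destruct (cover_beta (S K) T (δ/2)) as [l2 [W2 [L2 C2]]]; auto. lra.
    exists (l1 ++ l2). split. apply wf_app; auto. split.
    + rewrite lenL_app, S_INR. lra.
    + intros x Hx [i [Hi Hb]].
      destruct (Nat.eq_dec i (S K)).
      * subst. apply inL_app_r; auto.
      * apply inL_app_l; apply C1; auto. exists i; split; auto; lia.
Qed.

Lemma floor_log_bounds n m : (1 <= n)%nat -> (1 <= m)%nat -> floor_log n = m ->
  INR m <= ln (INR n) < INR m + 1.
Proof.
  intros Hn Hm E. unfold floor_log in E.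
  assert (Z : Int_part (ln (INR n)) = Z.of_nat m) by lia.
  destruct (base_Int_part (ln (INR n))) as [H1 H2].
  rewrite Z, <- INR_IZR_INZ in H1, H2. lra.
Qed.

Lemma exp_ge1 m : 1 <= exp (INR m).
Proof.
  destruct (Req_dec (INR m) 0) as [E|E]. rewrite E, exp_0; lra.
  assert (H := pos_INR m). rewrite <- exp_0. left. apply exp_increasing. lra.
Qed.

Definition Eblock (psi : nat -> R) (m : nat) (x : R) : Prop :=
  0 <= x < 1 /\ exists n, (1 <= n)%nat /\ floor_log n = m /\
    exists i, (1 <= i <= n)%nat /\ beta i x >= INR n * psi m.

Lemma cover_block psi m η : (1 <= m)%nat -> 0 < psi m -> 0 < η ->
  exists l, wf l /\ lenL l <= 4 / psi m + η /\
    forall x, Eblock psi m x -> inL x l.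
Proof.
  intros Hm Hp He.
  set (A := exp (INR m)).
  assert (HA : 1 <= A) by apply exp_ge1.
  set (T := A * psi m).
  assert (HT : 0 < T) by (unfold T; apply Rmult_lt_0_compat; lra).
  set (K := Z.to_nat (up (3 * A))).
  destruct (archimed (3 * A)) as [U1 U2].
  assert (HK : INR K = IZR (up (3 * A))).
  { unfold K. rewrite INR_IZR_INZ, Znat.Z2Nat.id; auto. apply le_IZR. lra. }
  destruct (cover_union K T η HT He) as [l [W [L C]]].
  exists l. split; auto. split.
  - assert (INR K * / T <= 4 / psi m).
    { unfold T. rewrite Rinv_mult. unfold Rdiv.
      replace (INR K * (/ A * / psi m)) with ((INR K / A) * / psi m) by (unfold Rdiv; ring).
      apply Rmult_le_compat_r. left; apply Rinv_0_lt_compat; auto.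
      apply (Rmult_le_reg_r A). lra. unfold Rdiv. rewrite Rmult_assoc, Rinv_l by lra. lra. }
    lra.
  - intros x [Hx [n [Hn [Hf [i [Hi Hb]]]]]].
    apply C; auto. exists i. split.
    + split. lia.
      destruct (floor_log_bounds n m Hn Hm Hf) as [B1 B2].
      assert (Hn0 : 0 < INR n) by (apply lt_0_INR; lia).
      assert (INR n < 3 * A).
      { rewrite <- (exp_ln (INR n)) by auto.
        apply Rlt_le_trans with (exp (INR m + 1)). apply exp_increasing; auto.
        rewrite exp_plus. unfold A. assert (H3 := exp_le_3).
        assert (0 < exp (INR m)) by apply exp_pos. nra. }
      assert (INR i < INR K).
      { apply Rle_lt_trans with (INR n). apply le_INR; lia. lra. }
      apply INR_lt in H0. lia.
    + destruct (floor_log_bounds n m Hn Hm Hf) as [B1 B2].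
      assert (Hn0 : 0 < INR n) by (apply lt_0_INR; lia).
      assert (A <= INR n).
      { rewrite <- (exp_ln (INR n)) by auto. unfold A.
        destruct B1 as [B1|B1]. left; apply exp_increasing; auto. rewrite B1; lra. }
      unfold T. apply Rle_ge. apply Rle_trans with (INR n * psi m).
      apply Rmult_le_compat_r; lra. lra.
Qed.

Fixpoint G (F : nat -> list (R*R)) (k : nat) : list (R*R) :=
  match k with 0 => nil | S k' => G F k' ++ F k' end.

Lemma G_length F k : (forall t, F t <> nil) -> (k <= length (G F k))%nat.
Proof.
  intros HF. induction k; simpl. lia. rewrite length_app.
  specialize (HF k). destruct (F k). congruence. simpl. lia.
Qed.

Lemma G_prefix F k j : exists r, G F (k + j) = G F k ++ r.
Proof.
  induction j. exists nil. rewrite Nat.add_0_r, app_nil_r. auto.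
  destruct IHj as [r E]. exists (r ++ F (k + j)%nat).
  rewrite Nat.add_succ_r. simpl. rewrite E, app_assoc. auto.
Qed.

Lemma G_nth F k k' d i : (k <= k')%nat -> (i < length (G F k))%nat ->
  nth i (G F k') d = nth i (G F k) d.
Proof.
  intros Hk Hi. destruct (G_prefix F k (k' - k)) as [r E].
  replace k' with (k + (k' - k))%nat by lia. rewrite E. apply app_nth1; auto.
Qed.

Lemma wf_G F k : (forall t, wf (F t)) -> wf (G F k).
Proof. intros; induction k; simpl. constructor. apply wf_app; auto. Qed.

Definition len (p : R*R) := snd p - fst p.

Lemma sum_zero N : sum_f_R0 (fun _ => 0) N = 0.
Proof. induction N; simpl; auto. rewrite IHN; ring. Qed.

Lemma sum_le_lenL L N : wf L ->
  sum_f_R0 (fun k => len (nth k L (0,0))) N <= lenL L.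
Proof.
  intros W. revert N. induction W as [|p L Hp W IH]; intros N.
  - simpl. rewrite (sum_eq _ (fun _ => 0)). rewrite sum_zero; lra.
    intros i _. destruct i; unfold len; simpl; ring.
  - destruct N. simpl. unfold len. assert (H := lenL_nonneg L W). lra.
    rewrite decomp_sum by lia. simpl Init.Nat.pred.
    specialize (IH N). simpl. unfold len at 1. simpl. lra.
Qed.

Lemma nth_wf L k : wf L -> fst (nth k L (0,0)) <= snd (nth k L (0,0)).
Proof.
  intros W. revert k. induction W; intros k; destruct k; simpl; auto; lra.
Qed.

Lemma countable_union (F : nat -> list (R*R)) (B : R) :
  (forall t, wf (F t)) -> (forall t, F t <> nil) -> (forall k, lenL (G F k) <= B) ->
  exists a b : nat -> R, (forall k, a k <= b k) /\
    (forall t x, inL x (F t) -> exists k, a k < x < b k) /\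
    (forall N, sum_f_R0 (fun k => b k - a k) N <= B).
Proof.
  intros W NE HB.
  set (s := fun k => nth k (G F (S k)) (0,0)).
  exists (fun k => fst (s k)), (fun k => snd (s k)). split; [|split].
  - intros k. unfold s. apply nth_wf, wf_G; auto.
  - intros t x [p [Hp Hx]].
    destruct (In_nth _ _ (0,0) Hp) as [j [Hj Ej]].
    set (i := (length (G F t) + j)%nat).
    assert (Hl := G_length F t NE).
    assert (E1 : nth i (G F (S t)) (0,0) = p).
    { simpl. unfold i. rewrite app_nth2 by lia. rewrite <- Ej. f_equal. lia. }
    exists i. unfold s. rewrite (G_nth F (S t) (S i)).
    rewrite E1; auto. unfold i; lia.
    simpl. rewrite length_app. unfold i; lia.
  - intros N.
    rewrite (sum_eq _ (fun k => len (nth k (G F (S N)) (0,0)))).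
    + apply Rle_trans with (lenL (G F (S N))). apply sum_le_lenL, wf_G; auto. auto.
    + intros k Hk. unfold len, s. rewrite (G_nth F (S k) (S N)); auto. lia.
      assert (H := G_length F (S k) NE). lia.
Qed.

Fixpoint Psum (f : nat -> R) (n : nat) : R :=
  match n with 0 => 0 | S n' => Psum f n' + f n' end.

Lemma Psum_S f n : Psum f (S n) = sum_f_R0 f n.
Proof. induction n. simpl; ring. change (Psum f (S (S n))) with (Psum f (S n) + f (S n)). rewrite IHn. simpl. ring. Qed.

Lemma Psum_mono f n k : (forall t, 0 <= f t) -> Psum f n <= Psum f (n + k).
Proof. intros H. induction k. rewrite Nat.add_0_r; lra. rewrite Nat.add_succ_r. simpl. specialize (H (n+k)%nat). lra. Qed.

Lemma Psum_le f l : (forall t, 0 <= f t) -> infinite_sum f l -> forall n, Psum f n <= l.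
Proof.
  intros Hf Hs n. destruct (Rle_dec (Psum f n) l) as [h|h]; auto. exfalso.
  destruct (Hs (Psum f n - l)) as [N HN]. lra.
  specialize (HN (n + N)%nat ltac:(lia)).
  rewrite <- Psum_S in HN. unfold R_dist in HN.
  assert (H2 := Psum_mono f n (S N) Hf). rewrite Nat.add_succ_r in H2.
  rewrite Rabs_right in HN; lra.
Qed.

Theorem mainTheorem10 (psi : nat -> R) (hpsi : inPsi psi) :
  lebesgue_null (fun x =>
    0 <= x < 1 /\
    forall N : nat, exists n : nat, (N <= n)%nat /\ (1 <= n)%nat /\
      exists i : nat, (1 <= i <= n)%nat /\
        beta i x >= INR n * psi (floor_log n)).
Proof.
  destruct hpsi as [Hpos [l Hl]].
  set (f := fun k => / psi (S k)).
  assert (Hf : forall t, 0 <= f t).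
  { intros t. left. apply Rinv_0_lt_compat. apply Hpos. lia. }
  intros eps He.
  destruct (Hl (eps/8)) as [N0 HN0]. lra.
  specialize (HN0 N0 (le_n _)). fold f in HN0. unfold R_dist in HN0.
  set (M0 := S N0).
  assert (HM0 : l - Psum f M0 < eps / 8).
  { unfold M0. rewrite Psum_S. apply Rabs_def2 in HN0. lra. }
  assert (Hch : forall t, exists c, wf c /\ lenL c <= 4 * f (M0 + t)%nat + eps/4 * (/2)^(S t) /\
     forall x, Eblock psi (S (M0 + t)) x -> inL x c).
  { intros t. assert (Hq := pos_half (S t)).
    destruct (cover_block psi (S (M0 + t)) (eps/4 * (/2)^(S t)) ltac:(lia)
      ltac:(apply Hpos; lia) ltac:(apply Rmult_lt_0_compat; lra)) as [c [W [L C]]].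
    exists c. split; [auto|split; [|auto]]. unfold f. unfold Rdiv in L. lra. }
  destruct (choice _ Hch) as [cf Hcf].
  set (F := fun t => (0,0) :: cf t).
  destruct (countable_union F (eps/2 + eps/4)) as [a [b [Hab [Hcov Hsum]]]].
  - intros t. constructor. simpl; lra. apply Hcf.
  - intros t. discriminate.
  - assert (forall k, lenL (G F k) <= 4 * (Psum f (M0 + k) - Psum f M0) + eps/4 * (1 - (/2)^k)).
    { induction k. simpl. rewrite Nat.add_0_r. lra.
      change (G F (S k)) with (G F k ++ F k). rewrite lenL_app. rewrite Nat.add_succ_r.
      change (Psum f (S (M0 + k))) with (Psum f (M0 + k) + f (M0 + k)%nat).
      destruct (Hcf k) as [_ [L _]].
      change (lenL (F k)) with ((0 - 0) + lenL (cf k)).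
      change ((/2)^(S k)) with (/2 * (/2)^k) in L |- *. lra. }
    intros k. specialize (H k).
    assert (Psum f (M0 + k) <= l) by (apply Psum_le; auto).
    assert (0 < (/2)^k) by apply pos_half. assert (0 <= eps/4 * (/2)^k) by (apply Rmult_le_pos; lra). lra.
  - exists a, b. split; auto. split.
    + intros x [Hx Hinf].
      set (M := S M0).
      destruct (archimed (exp (INR M))) as [U1 _].
      assert (HU : (0 <= up (exp (INR M)))%Z).
      { apply le_IZR. assert (H := exp_pos (INR M)). lra. }
      destruct (Hinf (Z.to_nat (up (exp (INR M))))) as [n [Hn1 [Hn2 [i [Hi Hb]]]]].
      set (m := floor_log n).
      assert (Hnr : exp (INR M) < INR n).
      { apply Rlt_le_trans with (INR (Z.to_nat (up (exp (INR M))))).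
        rewrite (INR_IZR_INZ (Z.to_nat _)), Znat.Z2Nat.id; auto. apply le_INR; auto. }
      assert (Hn0 : 0 < INR n) by (apply lt_0_INR; lia).
      assert (Hln : INR M < ln (INR n)).
      { rewrite <- (ln_exp (INR M)). apply ln_increasing; auto. apply exp_pos. }
      destruct (base_Int_part (ln (INR n))) as [_ B2].
      assert (Hz : (Z.of_nat M <= Int_part (ln (INR n)))%Z).
      { assert (IZR (Z.of_nat M) - 1 < IZR (Int_part (ln (INR n)))) by (rewrite <- INR_IZR_INZ; lra).
        assert (IZR (Z.of_nat M - 1) < IZR (Int_part (ln (INR n)))) by (rewrite minus_IZR; lra).
        apply lt_IZR in H0. lia. }
      assert (Hm : (M <= m)%nat) by (unfold m, floor_log; lia).
      set (t := (m - M)%nat).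
      assert (Em : m = S (M0 + t)) by (unfold t, M in *; lia).
      assert (HE : Eblock psi (S (M0 + t)) x).
      { split; auto. exists n. split; auto. split. rewrite <- Em; auto.
        exists i. split; auto. rewrite <- Em. auto. }
      apply (Hcov t). unfold F. destruct (Hcf t) as [_ [_ C]].
      destruct (C x HE) as [p [Hp Hpx]]. exists p. split; auto. right; auto.
    + intros N. specialize (Hsum N). lra.
Qed.
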